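(* Let $m\ge 1$. In the checker game on $2m+1$ positions, the configuration $b^mOw^m$ can be transformed, by a sequence of exactly $\frac{m(m+1)}{2}$ legal moves, into one of the configurations $O(bw)^m$ or $(bw)^mO$.
   Context: Positions $1,\dots,2m+1$ in a row; a configuration is a word over $\{b,w,O\}$ with exactly one $O$, where $b$ denotes a black checker, $w$ a white checker and $O$ the vacancy; $(bw)^m$ denotes $bw$ repeated $m$ times. A legal move is either a slide (a checker adjacent to the vacancy moves into it) or a jump (a checker at distance two from the vacancy jumps over the checker between them into the vacancy). *)

(* Defs.v *)
From mathcomp Require Import all_boot.
Set Implicit Arguments. Unset Strict Implicit. Unset Printing Implicit Defensive.

Inductive cell := Bc | Wc | Oc.

(* A configuration: a word over {b,w,O}; positions are 0-indexed here. *)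
Definition config := seq cell.

Definition legal_move (c c' : config) : Prop :=
  exists i j : nat,
    i < size c /\ j < size c /\
        nth Oc c i = Oc /\ nth Oc c j <> Oc /\
        (j = i.+1 \/ i = j.+1 \/
         (j = i.+2 /\ nth Oc c i.+1 <> Oc) \/
         (i = j.+2 /\ nth Oc c j.+1 <> Oc)) /\
        c' = set_nth Oc (set_nth Oc c i (nth Oc c j)) j Oc.

Inductive moves : nat -> config -> config -> Prop :=
  | moves0 c : moves 0 c c
  | movesS k c c' c'' : legal_move c c' -> moves k c' c'' -> moves k.+1 c c''.

Definition start_config (m : nat) : config := nseq m Bc ++ Oc :: nseq m Wc.
Definition bw_pow (m : nat) : config := flatten (nseq m [:: Bc; Wc]).

(* Main.v *)
Require Import Defs.
From mathcomp Require Import all_boot.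
From mathcomp Require Import zify.

Lemma lm_cons x c c' : legal_move c c' -> legal_move (x :: c) (x :: c').
Proof.
move=> [i [j [Hi [Hj [H1 [H2 [H3 H4]]]]]]].
exists i.+1, j.+1; do 4 (split; first by []).
split; last by rewrite H4.
by case: H3 => [->|[->|[[-> ?]|[-> ?]]]]; auto.
Qed.

Lemma lm_cat L c c' : legal_move c c' -> legal_move (L ++ c) (L ++ c').
Proof. by elim: L => //= x L IH H; apply: lm_cons; apply: IH. Qed.

Lemma slideL L x R : x <> Oc -> legal_move (L ++ Oc :: x :: R) (L ++ x :: Oc :: R).
Proof.
move=> Hx; apply: lm_cat; exists 0, 1; do 4 (split; first by []).
by split; [left|].
Qed.

Lemma slideR L x R : x <> Oc -> legal_move (L ++ x :: Oc :: R) (L ++ Oc :: x :: R).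
Proof.
move=> Hx; apply: lm_cat; exists 1, 0; do 4 (split; first by []).
by split; [right; left|].
Qed.

Lemma jumpF L x y R : x <> Oc -> y <> Oc ->
  legal_move (L ++ Oc :: x :: y :: R) (L ++ y :: x :: Oc :: R).
Proof.
move=> Hx Hy; apply: lm_cat; exists 0, 2; do 4 (split; first by []).
by split; [right; right; left|].
Qed.

Lemma jumpB L x y R : x <> Oc -> y <> Oc ->
  legal_move (L ++ x :: y :: Oc :: R) (L ++ Oc :: y :: x :: R).
Proof.
move=> Hx Hy; apply: lm_cat; exists 2, 0; do 4 (split; first by []).
by split; [right; right; right|].
Qed.

Lemma moves1 c c' : legal_move c c' -> moves 1 c c'.
Proof. by move=> H; apply: movesS H (moves0 _). Qed.

Lemma moves_trans a b x y z : moves a x y -> moves b y z -> moves (a + b) x z.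
Proof.
elim=> [c|k c c' c'' H _ IH] Hb //=.
by apply: movesS H (IH Hb).
Qed.

Definition F k := flatten (nseq k [:: Bc; Wc]).
Definition F' k := flatten (nseq k [:: Wc; Bc]).

Lemma jumpR k L R : moves k (L ++ Oc :: F k ++ R) (L ++ F' k ++ Oc :: R).
Proof.
elim: k L => [|k IH] L /=; first by apply: moves0.
apply: movesS (jumpF _ _ _ _ _ _) _ => //.
have := IH (L ++ [:: Wc; Bc]); rewrite -!catA /=; exact.
Qed.

Lemma nseqS_r (T : Type) k (x : T) : nseq k.+1 x = rcons (nseq k x) x.
Proof. by elim: k => //= k ->. Qed.

Lemma jumpLm k L R : moves k (L ++ F k ++ Oc :: R) (L ++ Oc :: F' k ++ R).
Proof.
elim: k R => [|k IH] R; first by apply: moves0.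
rewrite /F /F' !nseqS_r -!cats1 !flatten_cat /= ?cats0 -!catA /=.
rewrite catA.
apply: movesS (jumpB _ _ _ _ _ _) _ => //.
rewrite -catA; exact: IH.
Qed.

Lemma shiftF k X : Bc :: F' k ++ Wc :: X = F k.+1 ++ X.
Proof. by elim: k X => //= k IH X; rewrite IH. Qed.

Lemma nseq_shift (T : Type) c (x : T) Y : x :: nseq c x ++ Y = nseq c x ++ x :: Y.
Proof. by elim: c => //= c ->. Qed.

Definition G a k c := nseq a Bc ++ Oc :: Bc :: F' k ++ nseq c Wc.
Definition G' a k c := nseq c Bc ++ F' k ++ Wc :: Oc :: nseq a Wc.

Lemma phaseG a k c : moves k.+2 (G a k c.+2) (G' c k.+1 a).
Proof.
rewrite /G /G' /=.
have -> : Bc :: F' k ++ [:: Wc, Wc & nseq c Wc] = F k.+1 ++ Wc :: nseq c Wc.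
  by rewrite shiftF.
rewrite -addn1; apply: moves_trans (jumpR _ _ _) _.
apply: moves1; have := slideL (nseq a Bc ++ F' k.+1) Wc (nseq c Wc); rewrite -!catA => H; exact: H.
Qed.

Lemma phaseG' a k c : moves k.+2 (G' a k c.+2) (G c k.+1 a).
Proof.
rewrite /G /G'.
have -> : nseq c.+2 Bc ++ F' k ++ Wc :: Oc :: nseq a Wc =
   (nseq c Bc ++ [:: Bc]) ++ F k.+1 ++ Oc :: nseq a Wc.
  by rewrite -shiftF -catA /= -(@nseq_shift _ c Bc) -(@nseq_shift _ c Bc).
rewrite -addn1; apply: moves_trans (jumpLm _ _ _) _.
apply: moves1; rewrite -catA /=.
by apply: slideR.
Qed.

Fixpoint cost j k := if j is j'.+1 then k.+2 + cost j' k.+1 else 0.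

Lemma costE j k : 2 * cost j k = 2 * j * k + j * (j + 3).
Proof. elim: j k => [|j IH] k //=. rewrite mulnDr IH. lia. Qed.

Lemma baseF k X : Bc :: F' k ++ Wc :: X = bw_pow k.+1 ++ X.
Proof. exact: shiftF. Qed.

Lemma claim j : forall k,
  (moves (cost j k) (G j k j.+1) (Oc :: bw_pow (j + k).+1) \/
   moves (cost j k) (G j k j.+1) (bw_pow (j + k).+1 ++ [:: Oc])) /\
  (moves (cost j k) (G' j k j.+1) (bw_pow (j + k).+1 ++ [:: Oc]) \/
   moves (cost j k) (G' j k j.+1) (Oc :: bw_pow (j + k).+1)).
Proof.
elim: j => [|j IH] k.
  rewrite /G /G' /= add0n; split; left.
    by rewrite (baseF k [::]) cats0; apply: moves0.
  by rewrite (baseF k [:: Oc]); apply: moves0.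
have E : cost j.+1 k = k.+2 + cost j k.+1 by [].
have [[H1|H1] [H2|H2]] := IH k.+1; rewrite E (addSnnS j k);
  split; first [ left; by [apply: moves_trans (phaseG _ _ _) _ | apply: moves_trans (phaseG' _ _ _) _]
               | right; by [apply: moves_trans (phaseG _ _ _) _ | apply: moves_trans (phaseG' _ _ _) _]].
Qed.

Theorem lemma2 (m : nat) : 1 <= m ->
  moves (m * m.+1 %/ 2) (start_config m) (Oc :: bw_pow m) \/
  moves (m * m.+1 %/ 2) (start_config m) (bw_pow m ++ [:: Oc]).
Proof.
case: m => // j _.
have Hc : j.+1 * j.+2 %/ 2 = 1 + cost j 0.
  have := costE j 0; lia.
rewrite Hc.
have [[H|H] _] := claim j 0; rewrite addn0 in H; [left|right].
 all: eapply moves_trans; [apply: moves1|exact: H].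
 all: rewrite /start_config /G /= (@nseq_shift _ j Bc); exact: (slideR _ Bc).
Qed.
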